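(* For every sufficiently small $\epsilon>0$ there is a set of $2^{\Omega(\epsilon^{-1/2})}$ distributions supported on $[0,1]$, each having a non-decreasing PDF, such that every two distinct distributions in the set are at Lévy distance $\Omega(\epsilon)$ from each other.
   Context: Lévy distance: $\mathrm{L\acute{e}vy}(F,G)=\inf\{\epsilon: F(v-\epsilon)-\epsilon\le G(v)\le F(v+\epsilon)+\epsilon\ \forall v\}$. (Distributions with non-decreasing PDF are regular, i.e. $qF^{-1}(1-q)$ is concave.) *)

(* Defs.v *)
From Stdlib Require Import Reals.
From Coquelicot Require Import Coquelicot.
Open Scope R_scope.

Definition nondec_pdf_on_01 (f : R -> R) : Prop :=
  (forall x, 0 <= f x) /\
  (forall x, x < 0 \/ 1 < x -> f x = 0) /\
  (forall x y, 0 <= x -> x <= y -> y <= 1 -> f x <= f y) /\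
  is_RInt f 0 1 1.

(* The CDF of the density f supported on [0,1]: F(v) = int_{-oo}^v f. *)
Definition cdf_of (f : R -> R) (v : R) : R :=
  RInt f 0 (Rmax 0 (Rmin v 1)).

Definition levy_dist (F G : R -> R) : Rbar :=
  Glb_Rbar (fun e => forall v, F (v - e) - e <= G v /\ G v <= F (v + e) + e).

(* Main.v *)
Require Import Defs.
From Stdlib Require Import Reals.
From Coquelicot Require Import Coquelicot.
Open Scope R_scope.
From Stdlib Require Import Lra Lia Classical ZArith.

Fixpoint ssum (c : nat -> R) (j : nat) : R :=
  match j with O => 0 | S j' => ssum c j' + c j' end.

Lemma step_int (n : nat) (c : nat -> R) (f : R -> R) :
  (0 < n)%nat ->
  (forall l x, (l < n)%nat -> INR l / INR n < x < INR (S l) / INR n -> f x = c l) ->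
  forall j, (j <= n)%nat -> is_RInt f 0 (INR j / INR n) (ssum c j / INR n).
Proof.
  intros Hn Hf. assert (Hn' : 0 < INR n) by (apply lt_0_INR; lia).
  induction j as [|j IH]; intros Hj.
  - simpl. replace (0 / INR n) with 0 by (field; lra).
    exact (is_RInt_point f 0).
  - assert (H1 := IH ltac:(lia)).
    assert (H2 : is_RInt f (INR j / INR n) (INR (S j) / INR n) (c j / INR n)).
    { assert (H3 := is_RInt_const (INR j / INR n) (INR (S j) / INR n) (c j)).
      replace (c j / INR n) with (scal (INR (S j) / INR n - INR j / INR n) (c j)).
      2:{ rewrite S_INR. unfold scal; simpl; unfold mult; simpl. field. lra. }
      apply is_RInt_ext with (f := fun _ => c j); [|exact H3].
      intros x Hx. symmetry. apply Hf; [lia|].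
      assert (INR j / INR n < INR (S j) / INR n).
      { rewrite S_INR. apply Rmult_lt_compat_r; [apply Rinv_0_lt_compat; lra| lra]. }
      rewrite Rmin_left in Hx by lra. rewrite Rmax_right in Hx by lra. exact Hx. }
    assert (H4 := is_RInt_Chasles f _ _ _ _ _ H1 H2).
    simpl ssum. replace ((ssum c j + c j) / INR n) with (plus (ssum c j / INR n) (c j / INR n)).
    exact H4. unfold plus; simpl. field. lra.
Qed.

Definition cell (n : nat) (x : R) : nat := Z.to_nat (Int_part (INR n * x)).

Lemma Int_part_eq (l : nat) (y : R) : INR l < y < INR l + 1 -> Int_part y = Z.of_nat l.
Proof.
  intros H. unfold Int_part.
  assert (Hu : (Z.of_nat l + 1)%Z = up y).
  { apply tech_up; rewrite plus_IZR, <- INR_IZR_INZ; simpl; lra. }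
  rewrite <- Hu. lia.
Qed.

Lemma cell_open (n l : nat) (x : R) : (0 < n)%nat ->
  INR l / INR n < x < INR (S l) / INR n -> cell n x = l.
Proof.
  intros Hn Hx. assert (Hn' : 0 < INR n) by (apply lt_0_INR; lia).
  unfold cell. rewrite (Int_part_eq l). lia.
  rewrite S_INR in Hx. destruct Hx as [A B].
  apply Rmult_lt_compat_l with (r := INR n) in A; [|lra].
  apply Rmult_lt_compat_l with (r := INR n) in B; [|lra].
  replace (INR n * (INR l / INR n)) with (INR l) in A by (field; lra).
  replace (INR n * ((INR l + 1) / INR n)) with (INR l + 1) in B by (field; lra).
  lra.
Qed.

Lemma Int_part_le (x y : R) : x <= y -> (Int_part x <= Int_part y)%Z.
Proof.
  intros H. destruct (base_Int_part x) as [A B]. destruct (base_Int_part y) as [C D].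
  assert (IZR (Int_part x) < IZR (Int_part y) + 1) by lra.
  rewrite <- plus_IZR in H0. apply lt_IZR in H0. lia.
Qed.

Lemma cell_mono (n : nat) (x y : R) : x <= y -> (cell n x <= cell n y)%nat.
Proof.
  intros H. unfold cell.
  assert (H1 := Int_part_le (INR n * x) (INR n * y) ltac:(apply Rmult_le_compat_l; [apply pos_INR|lra])).
  lia.
Qed.

Lemma cell_le (n : nat) (x : R) : x <= 1 -> (cell n x <= n)%nat.
Proof.
  intros H. unfold cell. destruct (base_Int_part (INR n * x)) as [A _].
  assert (INR n * x <= INR n) by (rewrite <- (Rmult_1_r (INR n)) at 2; apply Rmult_le_compat_l; [apply pos_INR|lra]).
  assert (IZR (Int_part (INR n * x)) <= IZR (Z.of_nat n)) by (rewrite <- INR_IZR_INZ; lra).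
  apply le_IZR in H1. lia.
Qed.


Definition bit (i m : nat) : R := if Nat.testbit i m then 1 else 0.
Definition pert (i l : nat) : R := (if Nat.odd l then -1 else 1) * bit i (Nat.div2 l).
Definition cv (n i l : nat) : R := /2 + (INR l + /2) / INR n + pert i l / (2 * INR n).

Lemma bit_bound i m : 0 <= bit i m <= 1.
Proof. unfold bit; destruct (Nat.testbit i m); lra. Qed.

Lemma pert_bound i l : -1 <= pert i l <= 1.
Proof. unfold pert. pose proof (bit_bound i (Nat.div2 l)). destruct (Nat.odd l); lra. Qed.

Lemma cv_step n i l : (0 < n)%nat -> cv n i l <= cv n i (S l).
Proof.
  intros Hn. assert (0 < INR n) by (apply lt_0_INR; lia).
  unfold cv. rewrite S_INR. pose proof (pert_bound i l). pose proof (pert_bound i (S l)).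
  assert (pert i l / (2 * INR n) - pert i (S l) / (2 * INR n) <= 1 / INR n).
  { replace (pert i l / (2 * INR n) - pert i (S l) / (2 * INR n)) with ((pert i l - pert i (S l)) / 2 * / INR n) by (field; lra).
    unfold Rdiv at 2. rewrite Rmult_1_l. rewrite <- (Rmult_1_l (/ INR n)) at 2.
    apply Rmult_le_compat_r; [left; apply Rinv_0_lt_compat; lra| lra]. }
  replace ((INR l + 1 + / 2) / INR n) with ((INR l + / 2) / INR n + 1 / INR n) by (field; lra).
  lra.
Qed.

Lemma cv_mono n i l l' : (0 < n)%nat -> (l <= l')%nat -> cv n i l <= cv n i l'.
Proof.
  intros Hn H. induction H. lra. pose proof (cv_step n i m Hn). lra.
Qed.

Lemma ssum_even n i m : (0 < n)%nat ->
  ssum (cv n i) (2 * m) = INR (2 * m) / 2 + INR (2 * m) ^ 2 / (2 * INR n).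
Proof.
  intros Hn. assert (0 < INR n) by (apply lt_0_INR; lia).
  induction m as [|m IH].
  - simpl. field. lra.
  - replace (2 * S m)%nat with (S (S (2 * m))) by lia. cbn [ssum]. rewrite IH.
    unfold cv, pert. rewrite Nat.odd_succ, Nat.div2_succ_double, Nat.div2_double.
    rewrite Nat.even_mul, Nat.odd_mul. rewrite !S_INR. cbn [Nat.even Nat.odd andb negb orb].
    field. lra.
Qed.

Lemma ssum_odd n i m : (0 < n)%nat ->
  ssum (cv n i) (S (2 * m)) = INR (S (2 * m)) / 2 + INR (S (2 * m)) ^ 2 / (2 * INR n) + bit i m / (2 * INR n).
Proof.
  intros Hn. assert (0 < INR n) by (apply lt_0_INR; lia).
  cbn [ssum]. rewrite ssum_even by lia. unfold cv, pert. rewrite Nat.div2_double, Nat.odd_mul. rewrite !S_INR. cbn [Nat.even Nat.odd andb negb orb].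
  field. lra.
Qed.

Definition Cl (v : R) := Rmax 0 (Rmin v 1).
Lemma Cl_prop a b : a <= b -> 0 <= Cl a <= Cl b /\ Cl b <= 1 /\ Cl b - Cl a <= b - a.
Proof. intros H. unfold Cl, Rmax, Rmin.
  repeat (destruct Rle_dec); lra. Qed.

Lemma cdf_diff f M a b : nondec_pdf_on_01 f -> (forall x, f x <= M) -> a <= b ->
  0 <= cdf_of f b - cdf_of f a <= M * (b - a).
Proof.
  intros [Hp [Hs [Hm Hi]]] HM Hab.
  destruct (Cl_prop a b Hab) as [[H0 H1] [H2 H3]].
  assert (E : ex_RInt f 0 1) by (exists 1; exact Hi).
  assert (Eb : ex_RInt f 0 (Cl b)) by (apply (ex_RInt_Chasles_1 (V:=R_CompleteNormedModule) f 0 (Cl b) 1); [lra|exact E]).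
  assert (Ea : ex_RInt f 0 (Cl a)) by (apply (ex_RInt_Chasles_1 (V:=R_CompleteNormedModule) f 0 (Cl a) (Cl b)); [lra|exact Eb]).
  assert (Eab : ex_RInt f (Cl a) (Cl b)) by (apply (ex_RInt_Chasles_2 (V:=R_CompleteNormedModule) f 0 (Cl a) (Cl b)); [lra|exact Eb]).
  unfold cdf_of. fold (Cl a). fold (Cl b).
  assert (EQ : RInt f 0 (Cl b) - RInt f 0 (Cl a) = RInt f (Cl a) (Cl b)).
  { rewrite <- (RInt_Chasles (V:=R_CompleteNormedModule) f 0 (Cl a) (Cl b) Ea Eab).
    unfold plus; simpl. set (u := RInt f 0 (Cl a)). set (w := RInt f (Cl a) (Cl b)). simpl in u, w. lra. }
  rewrite EQ.
  split.
  - assert (L := RInt_le (fun _ => 0) f (Cl a) (Cl b) H1 (ex_RInt_const _ _ _) Eab (fun x _ => Hp x)).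
    rewrite RInt_const in L. unfold scal in L; simpl in L; unfold mult in L; simpl in L. lra.
  - assert (L := RInt_le f (fun _ => M) (Cl a) (Cl b) H1 Eab (ex_RInt_const _ _ _) (fun x _ => HM x)).
    rewrite RInt_const in L. unfold scal in L; simpl in L; unfold mult in L; simpl in L.
    assert (0 <= M) by (pose proof (Hp 0); pose proof (HM 0); lra).
    assert (M * (Cl b - Cl a) <= M * (b - a)) by (apply Rmult_le_compat_l; lra). nra.
Qed.

Lemma levy_lb F G D v0 :
  (forall a b, a <= b -> 0 <= F b - F a <= 2 * (b - a)) ->
  (forall a b, a <= b -> 0 <= G b - G a <= 2 * (b - a)) ->
  D <= Rabs (F v0 - G v0) -> Rbar_le (Finite (D / 3)) (levy_dist F G).
Proof.
  intros HF HG HD. unfold levy_dist.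
  destruct (Glb_Rbar_correct (fun e => forall v, F (v - e) - e <= G v /\ G v <= F (v + e) + e)) as [_ H].
  apply H. intros e He. simpl.
  destruct (Rle_lt_dec 0 e) as [Hе|Hе].
  - destruct (Rle_lt_dec 0 (F v0 - G v0)).
    + rewrite Rabs_pos_eq in HD by lra.
      destruct (He (v0 + e)) as [A _]. replace (v0 + e - e) with v0 in A by ring.
      pose proof (HG v0 (v0 + e) ltac:(lra)). lra.
    + rewrite Rabs_left in HD by lra.
      destruct (He v0) as [_ A]. pose proof (HF v0 (v0 + e) ltac:(lra)). lra.
  - destruct (He v0) as [A B]. pose proof (HF (v0 + e) (v0 - e) ltac:(lra)). lra.
Qed.

Definition fd (n i : nat) (x : R) : R :=
  if Rle_dec 0 x then if Rle_dec x 1 then cv n i (cell n x) else 0 else 0.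

Lemma fd_open k i l x : (1 <= k)%nat -> (l < 2 * k)%nat ->
  INR l / INR (2 * k) < x < INR (S l) / INR (2 * k) -> fd (2 * k) i x = cv (2 * k) i l.
Proof.
  intros Hk Hl Hx. assert (Hn : 0 < INR (2 * k)) by (apply lt_0_INR; lia).
  assert (0 <= INR l / INR (2 * k)) by (apply Rdiv_le_0_compat; [apply pos_INR|lra]).
  assert (INR (S l) / INR (2 * k) <= 1).
  { apply Rmult_le_reg_r with (INR (2 * k)); [lra|]. unfold Rdiv. rewrite Rmult_assoc, Rinv_l by lra.
    rewrite Rmult_1_r, Rmult_1_l. apply le_INR. lia. }
  unfold fd. destruct (Rle_dec 0 x); [|lra]. destruct (Rle_dec x 1); [|lra].
  rewrite (cell_open (2 * k) l x) by (lia || exact Hx). reflexivity.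
Qed.

Lemma cv_bounds k i l : (1 <= k)%nat -> (l <= 2 * k)%nat -> 0 <= cv (2 * k) i l <= 2.
Proof.
  intros Hk Hl. assert (Hn : 2 <= INR (2 * k)) by (replace 2 with (INR 2) by (simpl; ring); apply le_INR; lia).
  assert (Hl' : INR l <= INR (2 * k)) by (apply le_INR; lia).
  pose proof (pert_bound i l). pose proof (pos_INR l). unfold cv.
  split.
  - assert (-1 / (2 * INR (2 * k)) <= pert i l / (2 * INR (2 * k))) by (apply Rmult_le_compat_r; [left; apply Rinv_0_lt_compat; lra| lra]).
    assert (0 <= (INR l + / 2) / INR (2 * k)) by (apply Rdiv_le_0_compat; lra).
    assert (1 / (2 * INR (2 * k)) <= / 2) by (apply Rmult_le_reg_r with (2 * INR (2 * k)); [lra|]; field_simplify; lra).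
    replace (-1 / (2 * INR (2 * k))) with (- (1 / (2 * INR (2 * k)))) in H1 by (field; lra). lra.
  - assert (pert i l / (2 * INR (2 * k)) <= 1 / (2 * INR (2 * k))) by (apply Rmult_le_compat_r; [left; apply Rinv_0_lt_compat; lra| lra]).
    assert ((INR l + / 2) / INR (2 * k) + 1 / (2 * INR (2 * k)) <= 3 / 2).
    { apply Rmult_le_reg_r with (2 * INR (2 * k)); [lra|]. field_simplify; lra. }
    lra.
Qed.

Lemma fd_le k i x : (1 <= k)%nat -> fd (2 * k) i x <= 2.
Proof.
  intros Hk. unfold fd. destruct (Rle_dec 0 x); [|lra]. destruct (Rle_dec x 1); [|lra].
  apply cv_bounds; [exact Hk| apply cell_le; exact r0].
Qed.

Lemma fd_pdf k i : (1 <= k)%nat -> nondec_pdf_on_01 (fd (2 * k) i).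
Proof.
  intros Hk. assert (Hn : 0 < INR (2 * k)) by (apply lt_0_INR; lia).
  split; [|split; [|split]].
  - intros x. unfold fd. destruct (Rle_dec 0 x); [|lra]. destruct (Rle_dec x 1); [|lra].
    apply cv_bounds; [exact Hk| apply cell_le; exact r0].
  - intros x Hx. unfold fd. destruct (Rle_dec 0 x); [|reflexivity]. destruct (Rle_dec x 1); [lra|reflexivity].
  - intros x y H0 H1 H2. unfold fd. destruct (Rle_dec 0 x); [|lra]. destruct (Rle_dec x 1); [|lra].
    destruct (Rle_dec 0 y); [|lra]. destruct (Rle_dec y 1); [|lra].
    apply cv_mono; [lia| apply cell_mono; exact H1].
  - assert (H := step_int (2 * k) (cv (2 * k) i) (fd (2 * k) i) ltac:(lia)
      (fun l x Hl Hx => fd_open k i l x Hk Hl Hx) (2 * k) (le_n _)).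
    replace (INR (2 * k) / INR (2 * k)) with 1 in H by (field; lra).
    rewrite ssum_even in H by lia.
    replace ((INR (2 * k) / 2 + INR (2 * k) ^ 2 / (2 * INR (2 * k))) / INR (2 * k)) with 1 in H by (field; lra).
    exact H.
Qed.

Lemma cdf_at k i m : (1 <= k)%nat -> (m < k)%nat ->
  cdf_of (fd (2 * k) i) (INR (S (2 * m)) / INR (2 * k)) = ssum (cv (2 * k) i) (S (2 * m)) / INR (2 * k).
Proof.
  intros Hk Hm. assert (Hn : 0 < INR (2 * k)) by (apply lt_0_INR; lia).
  assert (0 <= INR (S (2 * m)) / INR (2 * k)) by (apply Rdiv_le_0_compat; [apply pos_INR|lra]).
  assert (INR (S (2 * m)) / INR (2 * k) <= 1).
  { apply Rmult_le_reg_r with (INR (2 * k)); [lra|]. unfold Rdiv. rewrite Rmult_assoc, Rinv_l by lra.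
    rewrite Rmult_1_r, Rmult_1_l. apply le_INR. lia. }
  unfold cdf_of. rewrite Rmin_left by lra. rewrite Rmax_right by lra.
  apply is_RInt_unique.
  exact (step_int (2 * k) (cv (2 * k) i) (fd (2 * k) i) ltac:(lia)
      (fun l x Hl Hx => fd_open k i l x Hk Hl Hx) (S (2 * m)) ltac:(lia)).
Qed.

Lemma diff_bit (k i j : nat) : (i < 2 ^ k)%nat -> (j < 2 ^ k)%nat -> i <> j ->
  exists m, (m < k)%nat /\ Nat.testbit i m <> Nat.testbit j m.
Proof.
  intros Hi Hj Hij. apply NNPP. intros Hn. apply Hij. apply Nat.bits_inj_iff. intros m.
  destruct (Nat.lt_ge_cases m k) as [Hm|Hm].
  - destruct (Bool.bool_dec (Nat.testbit i m) (Nat.testbit j m)) as [E|E]; [exact E|].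
    exfalso. apply Hn. exists m. auto.
  - assert (F : forall a, (a < 2 ^ k)%nat -> Nat.testbit a m = false).
    { intros a Ha. destruct a as [|a]. apply Nat.bits_0.
      apply Nat.bits_above_log2. apply Nat.log2_lt_pow2 in Ha; lia. }
    rewrite (F i Hi), (F j Hj). reflexivity.
Qed.

Theorem theorem5 :
  exists (c1 c2 eps0 : R), 0 < c1 /\ 0 < c2 /\ 0 < eps0 /\
  forall eps : R, 0 < eps -> eps < eps0 ->
  exists (N : nat) (f : nat -> R -> R),
    Rpower 2 (c1 * Rpower eps (- (1 / 2))) <= INR N /\
    (forall i, (i < N)%nat -> nondec_pdf_on_01 (f i)) /\
    (forall i j, (i < N)%nat -> (j < N)%nat -> i <> j ->
       Rbar_le (Finite (c2 * eps)) (levy_dist (cdf_of (f i)) (cdf_of (f j)))).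
Proof.
  exists 1, (1 / 96), 1. split; [lra|split; [lra|split; [lra|]]].
  intros eps He He1.
  set (x := Rpower eps (- (1 / 2))).
  assert (Hx0 : 0 < x) by apply exp_pos.
  assert (Hxx : eps * (x * x) = 1).
  { unfold x. rewrite <- Rpower_plus. replace (- (1 / 2) + - (1 / 2)) with (Ropp 1) by field.
    rewrite Rpower_Ropp, Rpower_1 by exact He. field. lra. }
  assert (0 < (1 - eps) * (x * x)) by (apply Rmult_lt_0_compat; nra).
  assert (Hx1 : 1 < x) by nra.
  destruct (archimed x) as [U1 U2].
  set (k := Z.to_nat (up x)).
  assert (Hz : (0 < up x)%Z) by (apply lt_IZR; simpl; lra).
  assert (Hk : INR k = IZR (up x)).
  { unfold k. rewrite INR_IZR_INZ, Z2Nat.id by lia. reflexivity. }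
  assert (Hk1 : (1 <= k)%nat) by (apply INR_le; rewrite Hk; simpl; lra).
  exists (2 ^ k)%nat, (fun i => fd (2 * k) i).
  split; [|split].
  - rewrite Rmult_1_l, pow_INR. simpl INR at 1. rewrite <- Rpower_pow by lra.
    apply Rle_Rpower; lra.
  - intros i _. apply fd_pdf; exact Hk1.
  - intros i j Hi Hj Hij.
    destruct (diff_bit k i j Hi Hj Hij) as [m [Hm Hb]].
    assert (Hn : INR (2 * k) = 2 * INR k) by (rewrite mult_INR; simpl; ring).
    assert (HkR : 1 <= INR k) by (replace 1 with (INR 1) by reflexivity; apply le_INR; exact Hk1).
    set (D := / (8 * INR k ^ 2)).
    apply Rbar_le_trans with (Finite (D / 3)).
    + simpl. unfold D.
      assert (INR k <= 2 * x) by lra.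
      assert (INR k ^ 2 <= 4 * (x * x)) by nra.
      apply Rmult_le_reg_r with (3 * 96 * (8 * INR k ^ 2)); [nra|].
      field_simplify; [|nra]. nra.
    + apply levy_lb with (v0 := INR (S (2 * m)) / INR (2 * k)).
      * intros a b Hab. apply cdf_diff; [apply fd_pdf; exact Hk1| intros; apply fd_le; exact Hk1| exact Hab].
      * intros a b Hab. apply cdf_diff; [apply fd_pdf; exact Hk1| intros; apply fd_le; exact Hk1| exact Hab].
      * rewrite !cdf_at by assumption. rewrite !ssum_odd by lia.
        unfold D. rewrite Hn.
        unfold bit. destruct (Nat.testbit i m), (Nat.testbit j m); try congruence.
        -- right. rewrite Rabs_pos_eq; [field; lra|].
           apply Rle_trans with (/ (8 * INR k ^ 2)); [left; apply Rinv_0_lt_compat; nra|].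
           right. field. lra.
        -- right. rewrite Rabs_left. field; lra.
           match goal with |- ?a < 0 => replace a with (- / (8 * INR k ^ 2)) by (field; lra) end.
           assert (0 < / (8 * INR k ^ 2)) by (apply Rinv_0_lt_compat; nra). lra.
Qed.
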